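(* Assume Case 2 holds and $d=0$. Then $\delta>d$, and with $\mathcal{I}_f=[l_1,\alpha]$ we have $w_l(Q^n)=\gamma_n=\gamma\delta^{n-1}$ for every $n\ge1$ and every $l\in\mathcal{I}_f$. Moreover, if $\delta=T_{s-1}$ then $\mathcal{I}_f=\{l_1\}$ and $w_{l_1}(Q^n)=\gamma_n$ for all $n\ge1$.
   Context: Let $f(z,w)=(p(z),q(z,w))$ be a holomorphic skew product germ at the origin of $\mathbb{C}^2$ with $f(0,0)=(0,0)$, where $p(z)=a_\delta z^\delta+O(z^{\delta+1})$ with $a_\delta\neq0$ and integer $\delta\ge1$, and $q(z,w)=\sum_{i+j\ge1}b_{ij}z^iw^j$ is not identically zero. For $n\ge1$ write $f^n=(p^n,Q^n)$. For a nonzero germ $g=\sum g_{ij}z^iw^j$ and real $l>0$ let $w_l(g)=\min\{i+lj: g_{ij}\neq0\}$. The Newton polygon $N(g)$ is the convex hull of $\bigcup_{g_{ij}\neq0}\{(x,y):x\ge i,\ y\ge j\}$. Let $(n_1,m_1),\dots,(n_s,m_s)$ be the vertices of $N(q)$ with $n_1<\cdots<n_s$, $m_1>\cdots>m_s$; for $1\le k\le s-1$ let $T_k$ be the $y$-intercept of the line through $(n_k,m_k)$ and $(n_{k+1},m_{k+1})$. Case 2 means: $s>1$ and $\delta\le T_{s-1}$; set $(\gamma,d)=(n_s,m_s)$ and $l_1=\frac{n_s-n_{s-1}}{m_{s-1}-m_s}$. Define $\gamma_n=\gamma(\delta^{n-1}+\delta^{n-2}d+\cdots+d^{n-1})$ (with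 $0^0=1$, so $\gamma_n=\gamma\delta^{n-1}$ when $d=0$) and $\alpha=\gamma/(\delta-d)$. *)

(* Defs.v *)
From HB Require Import structures.
From mathcomp Require Import all_boot all_order all_algebra.
From mathcomp Require Import reals.
From mathcomp Require Import complex.
Set Implicit Arguments. Unset Strict Implicit. Unset Printing Implicit Defensive.
Import Order.TTheory GRing.Theory Num.Theory.
Local Open Scope ring_scope.
Local Open Scope complex_scope.

Section Germs.
Variable R : realType.
Local Notation C := (R[i]).

(* formal power series in two variables z, w : coefficient of z^i w^j is s i j *)
Definition series2 := nat -> nat -> C.
Definition series1 := nat -> C.

(* holomorphic germ = convergent power series (Cauchy estimate form) *)
Definition convergent1 (s : series1) : Prop :=
  exists M K : R, forall i, `|s i| <= (M * K ^+ i)%:C.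
Definition convergent2 (s : series2) : Prop :=
  exists M K : R, forall i j, `|s i j| <= (M * K ^+ (i + j))%:C.

Definition ser1to2 (s : series1) : series2 :=
  fun i j => if j == 0%N then s i else 0.

(* bivariate polynomial truncation: outer variable w, inner variable z *)
Definition trunc2 (N : nat) (s : series2) : {poly {poly C}} :=
  \sum_(i < N.+1) \sum_(j < N.+1) (s i j *: 'X^i)%:P * 'X^j.

Definition coef2 (P : {poly {poly C}}) (a b : nat) : C := (P`_b)`_a.

(* composition g(u(z,w), v(z,w)), for u, v without constant term:
   the coefficient of z^a w^b only depends on terms of total degree <= a+b *)
Definition comp2 (g u v : series2) : series2 :=
  fun a b =>
    let N := (a + b)%N in
    coef2 (\sum_(i < N.+1) \sum_(j < N.+1)
             (g i j)%:P%:P * ((trunc2 N u) ^+ i * (trunc2 N v) ^+ j)) a b.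

Definition Zser : series2 := fun i j => ((i == 1%N) && (j == 0%N))%:R.
Definition Wser : series2 := fun i j => ((i == 0%N) && (j == 1%N))%:R.

(* f^n = (p^n, Q^n), with f^0 = id and f^(n+1) = f o f^n *)
Fixpoint skew_iter (p : series1) (q : series2) (n : nat) : series2 * series2 :=
  match n with
  | 0%N => (Zser, Wser)
  | n'.+1 => let uv := skew_iter p q n' in
             (comp2 (ser1to2 p) uv.1 uv.2, comp2 q uv.1 uv.2)
  end.

Definition Qiter (p : series1) (q : series2) (n : nat) : series2 :=
  (skew_iter p q n).2.

Definition wl_is (g : series2) (l x : R) : Prop :=
  (exists i j, g i j != 0 /\ i%:R + l * j%:R = x) /\
  (forall i j, g i j != 0 -> x <= i%:R + l * j%:R).

(* Newton polygon N(g): convex hull of the union of quadrants (i,j) + R_{>=0}^2 *)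
Definition in_newton (g : series2) (x y : R) : Prop :=
  exists (k : nat) (c : 'I_k -> R) (pt : 'I_k -> nat * nat),
    [/\ forall t, 0 <= c t,
        \sum_(t < k) c t = 1,
        forall t, g (pt t).1 (pt t).2 != 0,
        \sum_(t < k) c t * ((pt t).1)%:R <= x &
        \sum_(t < k) c t * ((pt t).2)%:R <= y].

Definition newton_vertex (g : series2) (x y : R) : Prop :=
  in_newton g x y /\
  forall x1 y1 x2 y2 t, in_newton g x1 y1 -> in_newton g x2 y2 ->
    0 < t < 1 -> x = t * x1 + (1 - t) * x2 -> y = t * y1 + (1 - t) * y2 ->
    x1 = x2 /\ y1 = y2.

End Germs.

(* gamma_n = gamma (delta^(n-1) + delta^(n-2) d + ... + d^(n-1)), with 0^0 = 1 *)
Definition gamma_n (gamma delta d n : nat) : nat :=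
  (gamma * \sum_(k < n) delta ^ (n.-1 - k) * d ^ k)%N.

(* Main.v *)
Require Import Defs.
From HB Require Import structures.
From mathcomp Require Import all_boot all_order all_algebra.
From mathcomp Require Import reals.
From mathcomp Require Import complex.
From mathcomp Require Import ring lra zify.
From Stdlib Require Import Classical.
Import Order.TTheory GRing.Theory Num.Theory.
Local Open Scope ring_scope.
Set Implicit Arguments. Unset Strict Implicit. Unset Printing Implicit Defensive.
Section P.
Definition wt (R : realType) (l : R) (a b : nat) : R := a%:R + l * b%:R.
Definition kge (R : realType) (x y X Y : R) : Prop := X < x \/ (x = X /\ y <= Y).
Definition kgt (R : realType) (x y X Y : R) : Prop := X < x \/ (x = X /\ y < Y).
Definition ge2 (R : realType) (l : R) (P : {poly {poly R[i]}}) (X Y : R) :=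
  forall a b, coef2 P a b != 0 -> kge (wt l a b) b%:R X Y.
Definition sge (R : realType) (l : R) (s : series2 R) (X Y : R) :=
  forall a b, s a b != 0 -> kge (wt l a b) b%:R X Y.

Lemma coef2_sum (R : realType) (I : Type) (r : seq I) (P : pred I) (F : I -> {poly {poly R[i]}}) a b :
  coef2 (\sum_(i <- r | P i) F i) a b = \sum_(i <- r | P i) coef2 (F i) a b.
Proof. by rewrite /coef2 !coef_sum. Qed.

Lemma coef2M (R : realType) (P Q : {poly {poly R[i]}}) a b :
  coef2 (P * Q) a b = \sum_(j < b.+1) \sum_(i < a.+1) coef2 P i j * coef2 Q (a - i) (b - j).
Proof. rewrite /coef2 coefM coef_sum; apply: eq_bigr => j _; by rewrite coefM. Qed.

Lemma coef2CM (R : realType) (c : R[i]) (P : {poly {poly R[i]}}) a b :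
  coef2 (c%:P%:P * P) a b = c * coef2 P a b.
Proof. by rewrite /coef2 !coefCM. Qed.

Lemma coef2_1 (R : realType) a b :
  coef2 (1 : {poly {poly R[i]}}) a b = ((a == 0%N) && (b == 0%N))%:R.
Proof. rewrite /coef2 coef1; case: (b == 0%N); rewrite ?coef1 ?andbT ?andbF //.
by rewrite coef0. Qed.

Lemma sum_single (R : realType) (n k : nat) (F : 'I_n -> R[i]) (kn : (k < n)%N) :
  (forall i : 'I_n, val i <> k -> F i = 0) -> \sum_(i < n) F i = F (Ordinal kn).
Proof.
move=> H; rewrite (bigD1 (Ordinal kn)) //= big1 ?addr0 // => i /eqP ne.
apply: H => //; move=> e; apply: ne; apply: val_inj => //.
Qed.

Lemma coef2_trunc (R : realType) N (s : series2 R) a b :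
  coef2 (trunc2 N s) a b = if (a <= N)%N && (b <= N)%N then s a b else 0.
Proof.
rewrite /trunc2 coef2_sum; under eq_bigr do rewrite coef2_sum.
have E : forall i j, coef2 ((s i j *: 'X^i)%:P * 'X^j) a b = s i j * ((a == i) && (b == j))%:R.
  move=> i j; rewrite /coef2 mul_polyC coefZ coefXn.
  case: (b == j); rewrite ?andbF ?mulr0 ?coef0 ?andbT ?mulr1 //.
  by rewrite coefZ coefXn.
case: ifP => [/andP [aN bN]|H].
  have aN' : (a < N.+1)%N by []. have bN' : (b < N.+1)%N by [].
  rewrite (sum_single aN'); last first.
    move=> i ne; apply: big1 => j _; rewrite E; move/eqP: ne; rewrite eq_sym => /negbTE ->.
    by rewrite mulr0.
  rewrite (sum_single bN'); last first.
    move=> j ne; rewrite E eqxx; move/eqP: ne; rewrite eq_sym => /negbTE ->; by rewrite mulr0.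
  by rewrite E !eqxx mulr1.
apply: big1 => i _; apply: big1 => j _; rewrite E.
case: eqP => [ai|]; case: eqP => [bj|] //=; rewrite ?mulr0 //.
subst; move: H; have := ltn_ord i; have := ltn_ord j; rewrite !ltnS; by move=> -> ->.
Qed.
End P.
Section Q.
Lemma wtD (R : realType) (l : R) a b c d : wt l (a + c) (b + d) = wt l a b + wt l c d.
Proof. rewrite /wt !natrD; ring. Qed.
Lemma wtM (R : realType) (l : R) n a b : wt l (n * a) (n * b) = n%:R * wt l a b.
Proof. rewrite /wt !natrM; ring. Qed.

Lemma keq (R : realType) (x1 y1 X1 Y1 x2 y2 X2 Y2 : R) :
  kge x1 y1 X1 Y1 -> kge x2 y2 X2 Y2 -> x1 + x2 = X1 + X2 -> y1 + y2 = Y1 + Y2 ->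
  x1 = X1 /\ y1 = Y1.
Proof. rewrite /kge; lra. Qed.

Lemma kgeD (R : realType) (x1 y1 X1 Y1 x2 y2 X2 Y2 : R) :
  kge x1 y1 X1 Y1 -> kge x2 y2 X2 Y2 -> kge (x1 + x2) (y1 + y2) (X1 + X2) (Y1 + Y2).
Proof. rewrite /kge; lra. Qed.

Lemma kge_trans (R : realType) (x y X Y X' Y' : R) :
  kge x y X Y -> kge X Y X' Y' -> kge x y X' Y'.
Proof. rewrite /kge; lra. Qed.

Lemma kge_kgt (R : realType) (x y X Y : R) : kge x y X Y -> kgt X Y x y -> False.
Proof. rewrite /kge /kgt; lra. Qed.

Lemma wt_inj (R : realType) (l : R) a b c d :
  wt l a b = wt l c d -> (b%:R : R) = d%:R -> a = c /\ b = d.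
Proof.
rewrite /wt => e1 e2; have e3 : (a%:R : R) = c%:R by rewrite e2 in e1; lra.
by move/eqP: e2; move/eqP: e3; rewrite !eqr_nat => /eqP -> /eqP ->.
Qed.

Lemma ge2_mul (R : realType) (l : R) P Q X1 Y1 X2 Y2 :
  ge2 l P X1 Y1 -> ge2 l Q X2 Y2 -> ge2 l (P * Q) (X1 + X2) (Y1 + Y2).
Proof.
move=> HP HQ a b; rewrite coef2M => nz; apply: NNPP => nk; move/eqP: nz; apply.
apply: big1 => j _; apply: big1 => i _.
case: (boolP (coef2 P i j == 0)) => [/eqP -> |nzP]; first by rewrite mul0r.
case: (boolP (coef2 Q (a - i) (b - j) == 0)) => [/eqP -> |nzQ]; first by rewrite mulr0.
exfalso; apply: nk.
have := kgeD (HP _ _ nzP) (HQ _ _ nzQ).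
have ia : (i <= a)%N by rewrite -ltnS. have jb : (j <= b)%N by rewrite -ltnS.
by rewrite -wtD -natrD !subnKC.
Qed.

Lemma ge2_mul_exact (R : realType) (l : R) P Q a1 b1 a2 b2 :
  ge2 l P (wt l a1 b1) b1%:R -> ge2 l Q (wt l a2 b2) b2%:R ->
  coef2 (P * Q) (a1 + a2) (b1 + b2) = coef2 P a1 b1 * coef2 Q a2 b2.
Proof.
move=> HP HQ; rewrite coef2M.
have Z : forall i j, (i <= a1 + a2)%N -> (j <= b1 + b2)%N ->
    coef2 P i j * coef2 Q (a1 + a2 - i) (b1 + b2 - j) != 0 -> i = a1 /\ j = b1.
  move=> i j ia jb.
  case: (boolP (coef2 P i j == 0)) => [/eqP -> |nzP]; first by rewrite mul0r eqxx.
  case: (boolP (coef2 Q (a1 + a2 - i) (b1 + b2 - j) == 0)) => [/eqP -> |nzQ];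
    first by rewrite mulr0 eqxx.
  move=> _; suff [e1 e2] : wt l i j = wt l a1 b1 /\ (j%:R:R) = b1%:R by exact: (wt_inj e1 e2).
  apply: (keq (HP _ _ nzP) (HQ _ _ nzQ)).
  - by rewrite -!wtD !subnKC.
  - by rewrite -!natrD !subnKC.
have b1s : (b1 < (b1 + b2).+1)%N by rewrite ltnS leq_addr.
have a1s : (a1 < (a1 + a2).+1)%N by rewrite ltnS leq_addr.
rewrite (sum_single b1s); last first.
  move=> j ne; apply: big1 => i _; apply/eqP; apply: NNPP => /negP nz.
  have [_ e] := Z _ _ (ltn_ord i) (ltn_ord j) nz; exact: ne.
rewrite (sum_single a1s); last first.
  move=> i ne; apply/eqP; apply: NNPP => /negP nz.
  have [e _] := Z _ _ (ltn_ord i) b1s nz; exact: ne.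
by rewrite /= !addKn.
Qed.

Lemma ge2_exp (R : realType) (l : R) P X Y n :
  ge2 l P X Y -> ge2 l (P ^+ n) (n%:R * X) (n%:R * Y).
Proof.
move=> HP; elim: n => [|n IH].
  move=> a b; rewrite expr0 coef2_1; case: (a =P 0%N) => [->|_]; case: (b =P 0%N) => [->|_] /=;
    rewrite ?andbF ?eqxx //= => _.
  rewrite /kge /wt; right; split; first by rewrite !mul0r mulr0 addr0.
  by rewrite mul0r.
rewrite exprS.
have -> : (n.+1)%:R * X = X + n%:R * X by rewrite -addn1 natrD; ring.
have -> : (n.+1)%:R * Y = Y + n%:R * Y by rewrite -addn1 natrD; ring.
exact: ge2_mul.
Qed.

Lemma ge2_exp_exact (R : realType) (l : R) P a b n :
  ge2 l P (wt l a b) b%:R -> coef2 (P ^+ n) (n * a) (n * b) = coef2 P a b ^+ n.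
Proof.
move=> HP; elim: n => [|n IH].
  by rewrite expr0 !mul0n coef2_1 expr0.
rewrite exprS !mulSn (@ge2_mul_exact _ l) // ?IH ?exprS //.
have := @ge2_exp _ l P _ _ n HP; by rewrite -wtM -natrM.
Qed.

Lemma ge2_sum (R : realType) (l : R) (I : Type) (r : seq I) (Pr : pred I) F X Y :
  (forall i, Pr i -> ge2 l (F i) X Y) -> ge2 l (\sum_(i <- r | Pr i) F i) X Y.
Proof.
move=> H a b; rewrite coef2_sum => nz; apply: NNPP => nk; move/eqP: nz; apply.
apply: big1 => i Pi; apply/eqP; apply: NNPP => /negP nz; apply: nk; exact: (H i Pi a b nz).
Qed.

Lemma ge2_weak (R : realType) (l : R) P X1 Y1 X Y :
  ge2 l P X1 Y1 -> kge X1 Y1 X Y -> ge2 l P X Y.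
Proof. move=> H k a b nz; exact: kge_trans (H a b nz) k. Qed.

Lemma ge2_CM (R : realType) (l : R) c P X Y : ge2 l P X Y -> ge2 l (c%:P%:P * P) X Y.
Proof.
move=> H a b; rewrite coef2CM => nz; apply: H; apply: contraNneq nz => ->; by rewrite mulr0.
Qed.

Lemma sge_trunc (R : realType) (l : R) N s X Y : sge l s X Y -> ge2 l (trunc2 N s) X Y.
Proof. move=> H a b; rewrite coef2_trunc; case: ifP => _; [exact: H | by rewrite eqxx]. Qed.
End Q.
Section Cm.
Lemma comp2_ge (R : realType) (l : R) (g u v : series2 R) U1 U2 V1 V2 X Y :
  sge l u U1 U2 -> sge l v V1 V2 ->
  (forall i j, g i j != 0 -> kge (i%:R * U1 + j%:R * V1) (i%:R * U2 + j%:R * V2) X Y) ->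
  sge l (comp2 g u v) X Y.
Proof.
move=> Hu Hv Hg a b; rewrite /comp2.
apply: ge2_sum => i _; apply: ge2_sum => j _.
case: (boolP (g i j == 0)) => [/eqP -> | nz].
  by move=> a' b'; rewrite coef2CM mul0r eqxx.
apply: ge2_CM; apply: ge2_weak (Hg _ _ nz).
exact: ge2_mul (ge2_exp (sge_trunc Hu)) (ge2_exp (sge_trunc Hv)).
Qed.

Lemma comp2_exact (R : realType) (l : R) (g u v : series2 R) mu1 mu2 mv1 mv2 i0 j0 :
  sge l u (wt l mu1 mu2) mu2%:R -> sge l v (wt l mv1 mv2) mv2%:R ->
  (0 < mu1 + mu2)%N -> (0 < mv1 + mv2)%N ->
  (forall i j, g i j != 0 -> (i, j) <> (i0, j0) ->
     kgt (i%:R * wt l mu1 mu2 + j%:R * wt l mv1 mv2) (i%:R * mu2%:R + j%:R * mv2%:R)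
         (i0%:R * wt l mu1 mu2 + j0%:R * wt l mv1 mv2) (i0%:R * mu2%:R + j0%:R * mv2%:R)) ->
  comp2 g u v (i0 * mu1 + j0 * mv1)%N (i0 * mu2 + j0 * mv2)%N =
    g i0 j0 * u mu1 mu2 ^+ i0 * v mv1 mv2 ^+ j0.
Proof.
move=> Hu Hv pu pv Hg; rewrite /comp2.
set a := (i0 * mu1 + j0 * mv1)%N; set b := (i0 * mu2 + j0 * mv2)%N.
set N := (a + b)%N.
rewrite coef2_sum; under eq_bigr do rewrite coef2_sum.
have Zt : forall i j, (i, j) <> (i0, j0) ->
    coef2 ((g i j)%:P%:P * (trunc2 N u ^+ i * trunc2 N v ^+ j)) a b = 0.
  move=> i j ne; rewrite coef2CM.
  case: (boolP (g i j == 0)) => [/eqP -> | nz]; first by rewrite mul0r.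
  apply/eqP; apply: NNPP => /negP; rewrite mulf_eq0 negb_or => /andP [_ nzc].
  have := ge2_mul (ge2_exp (n:=i) (sge_trunc (N:=N) Hu)) (ge2_exp (n:=j) (sge_trunc (N:=N) Hv)) nzc.
  move=> K; apply: (kge_kgt K).
  have -> : wt l a b = i0%:R * wt l mu1 mu2 + j0%:R * wt l mv1 mv2 by rewrite /a /b wtD !wtM.
  have -> : (b%:R : R) = i0%:R * mu2%:R + j0%:R * mv2%:R by rewrite /b natrD !natrM.
  exact: Hg.
have i0N : (i0 < N.+1)%N by rewrite ltnS /N /a /b; nia.
have j0N : (j0 < N.+1)%N by rewrite ltnS /N /a /b; nia.
rewrite (sum_single i0N); last first.
  move=> i ne; apply: big1 => j _; apply: Zt => /(congr1 fst) /= e; exact: ne e.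
rewrite (sum_single j0N); last first.
  move=> j ne; apply: Zt => /(congr1 snd) /= e; exact: ne e.
rewrite /= coef2CM /a /b (@ge2_mul_exact _ l); last 2 first.
- have := ge2_exp (n:=i0) (sge_trunc (N:=N) Hu); by rewrite -wtM -natrM.
- have := ge2_exp (n:=j0) (sge_trunc (N:=N) Hv); by rewrite -wtM -natrM.
rewrite !(@ge2_exp_exact _ l); last 2 first.
- exact: sge_trunc.
- exact: sge_trunc.
rewrite !coef2_trunc mulrA.
have Eu : (if (mu1 <= N)%N && (mu2 <= N)%N then u mu1 mu2 else 0) ^+ i0 = u mu1 mu2 ^+ i0.
  case: (posnP i0) => [->|i0p]; first by rewrite !expr0.
  rewrite ifT //; apply/andP; split; rewrite /N /a /b; nia.
have Ev : (if (mv1 <= N)%N && (mv2 <= N)%N then v mv1 mv2 else 0) ^+ j0 = v mv1 mv2 ^+ j0.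
  case: (posnP j0) => [->|j0p]; first by rewrite !expr0.
  rewrite ifT //; apply/andP; split; rewrite /N /a /b; nia.
by rewrite Eu Ev.
Qed.
End Cm.
Section N.
Lemma ex_min (P : nat -> Prop) n : P n -> exists k, P k /\ forall k', P k' -> (k <= k')%N.
Proof.
move=> Pn; apply: NNPP => H.
suff: forall N k, (k <= N)%N -> ~ P k by move/(_ n n (leqnn n)).
elim=> [|N IH] k kN Pk; apply: H; exists k; split=> // k' Pk'; rewrite leqNgt; apply/negP => lt.
  lia.
by apply: (IH k' _ Pk'); lia.
Qed.

Lemma in_newton_pt (R : realType) (q : series2 R) i j (x y : R) :
  q i j != 0 -> i%:R <= x -> j%:R <= y -> in_newton q x y.
Proof.
move=> nz hx hy; exists 1%N, (fun _ => 1), (fun _ => (i, j)).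
split; [move=> _; exact: ler01 | by rewrite big_ord1 | by [] | by rewrite big_ord1 mul1r | by rewrite big_ord1 mul1r].
Qed.

Lemma newton_lb (R : realType) (q : series2 R) (a b G0 : R) x y :
  0 <= a -> 0 <= b -> (forall i j, q i j != 0 -> G0 <= a * i%:R + b * j%:R) ->
  in_newton q x y -> exists k (c : 'I_k -> R) (pt : 'I_k -> nat * nat),
   [/\ forall t, 0 <= c t, \sum_(t < k) c t = 1, forall t, q (pt t).1 (pt t).2 != 0,
       \sum_(t < k) c t * ((pt t).1)%:R <= x & \sum_(t < k) c t * ((pt t).2)%:R <= y] /\
       G0 <= a * x + b * y /\
       (a * x + b * y <= G0 -> forall t, c t = 0 \/ a * ((pt t).1)%:R + b * ((pt t).2)%:R = G0).
Proof.
move=> a0 b0 H [k [c [pt [c0 c1 sp sx sy]]]].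
have E : \sum_(t < k) c t * (a * ((pt t).1)%:R + b * ((pt t).2)%:R) =
         a * \sum_(t < k) c t * ((pt t).1)%:R + b * \sum_(t < k) c t * ((pt t).2)%:R.
  rewrite !mulr_sumr -big_split /=; apply: eq_bigr => t _; ring.
have L : G0 <= \sum_(t < k) c t * (a * ((pt t).1)%:R + b * ((pt t).2)%:R).
  have -> : G0 = \sum_(t < k) c t * G0 by rewrite -mulr_suml c1 mul1r.
  apply: ler_sum => t _; apply: ler_wpM2l => //; exact: H.
have Lx : a * \sum_(t < k) c t * ((pt t).1)%:R <= a * x by apply: ler_wpM2l.
have Ly : b * \sum_(t < k) c t * ((pt t).2)%:R <= b * y by apply: ler_wpM2l.
exists k, c, pt; split => //; split; first by lra.
move=> le t.
have S0 : \sum_(t < k) c t * (a * ((pt t).1)%:R + b * ((pt t).2)%:R - G0) = 0.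
  have -> : \sum_(t < k) c t * (a * ((pt t).1)%:R + b * ((pt t).2)%:R - G0) =
    \sum_(t < k) c t * (a * ((pt t).1)%:R + b * ((pt t).2)%:R) - \sum_(t < k) c t * G0.
    by rewrite -sumrB; apply: eq_bigr => u _; ring.
  rewrite -mulr_suml c1 mul1r; lra.
have nn : forall u : 'I_k, true -> 0 <= c u * (a * ((pt u).1)%:R + b * ((pt u).2)%:R - G0).
  move=> u _; apply: mulr_ge0 => //; have := H _ _ (sp u); lra.
have := psumr_eq0P nn S0; move/(_ t isT)/eqP; rewrite mulf_eq0 => /orP [/eqP -> | /eqP e]; [by left | right; lra].
Qed.

Lemma extreme_of_min (R : realType) (q : series2 R) (a b : R) (i0 j0 : nat) :
  0 < a -> 0 < b -> q i0 j0 != 0 ->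
  (forall i j, q i j != 0 -> (i, j) <> (i0, j0) -> a * i0%:R + b * j0%:R < a * i%:R + b * j%:R) ->
  newton_vertex q i0%:R j0%:R.
Proof.
move=> a0 b0 nz0 H.
set G0 := a * i0%:R + b * j0%:R.
have Hg : forall i j, q i j != 0 -> G0 <= a * i%:R + b * j%:R.
  move=> i j nz; case: (pair_eqP (i, j) (i0, j0)) => [[-> ->]|ne]; first by [].
  by apply: ltW; apply: H.
have key : forall x y, in_newton q x y -> G0 <= a * x + b * y /\
    (a * x + b * y = G0 -> x = i0%:R /\ y = j0%:R).
  move=> x y inx.
  have [k [c [pt [[c0 c1 sp sx sy] [lb eqc]]]]] := newton_lb (ltW a0) (ltW b0) Hg inx.
  split => // e.
  have le' : a * x + b * y <= G0 by rewrite e.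
  have P1 : forall t, c t * ((pt t).1)%:R = c t * i0%:R /\ c t * ((pt t).2)%:R = c t * j0%:R.
    move=> t; case: (eqc le' t) => [-> | et]; first by rewrite !mul0r.
    case: (pair_eqP (pt t) (i0, j0)) => [-> // | ne].
    have := H _ _ (sp t); rewrite -surjective_pairing => /(_ ne); move: et; rewrite /G0; lra.
  have Sx : \sum_(t < k) c t * ((pt t).1)%:R = i0%:R.
    rewrite (eq_bigr (fun t => c t * i0%:R)) ?(c1, mulr_suml) //; last by move=> t _; case: (P1 t).
    by rewrite -mulr_suml c1 mul1r.
  have Sy : \sum_(t < k) c t * ((pt t).2)%:R = j0%:R.
    rewrite (eq_bigr (fun t => c t * j0%:R)); last by move=> t _; case: (P1 t).
    by rewrite -mulr_suml c1 mul1r.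
  rewrite Sx in sx; rewrite Sy in sy.
  have : a * i0%:R <= a * x by apply: ler_wpM2l => //; exact: ltW.
  have : b * j0%:R <= b * y by apply: ler_wpM2l => //; exact: ltW.
  move: e; rewrite /G0 => e l1 l2.
  have ex : a * x = a * i0%:R by lra.
  have ey : b * y = b * j0%:R by lra.
  split; [exact: (mulfI (lt0r_neq0 a0)) | exact: (mulfI (lt0r_neq0 b0))].
split; first by apply: (in_newton_pt nz0).
move=> x1 y1 x2 y2 t in1 in2 /andP [t0 t1] ex ey.
have [k1 e1] := key _ _ in1; have [k2 e2] := key _ _ in2.
have h : a * i0%:R + b * j0%:R = t * (a * x1 + b * y1) + (1 - t) * (a * x2 + b * y2).
  rewrite ex ey; ring.
have g1 : a * x1 + b * y1 = G0.
  have : 0 <= t * (a * x1 + b * y1 - G0) by apply: mulr_ge0; lra.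
  have : 0 <= (1 - t) * (a * x2 + b * y2 - G0) by apply: mulr_ge0; lra.
  rewrite /G0 in h k1 k2 *; nra.
have g2 : a * x2 + b * y2 = G0.
  have : 0 <= t * (a * x1 + b * y1 - G0) by apply: mulr_ge0; lra.
  have : 0 <= (1 - t) * (a * x2 + b * y2 - G0) by apply: mulr_ge0; lra.
  rewrite /G0 in h k1 k2 *; nra.
have [-> ->] := e1 g1; have [-> ->] := e2 g2; by [].
Qed.
End N.
Section NE.
Lemma nonext (R : realType) (q : series2 R) (g n1 m i j : nat) :
  (0 < m)%N -> (n1 < g)%N -> newton_vertex q n1%:R m%:R -> in_newton q g%:R 0 ->
  q i j != 0 -> (m < j)%N -> (m * i + (g - n1) * j <= m * g)%N -> False.
Proof.
move=> m0 ng [_ ext] ing nz mj F.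
have F' : (m%:R * i%:R + (g%:R - n1%:R) * j%:R <= m%:R * g%:R :> R).
  rewrite -natrB; last exact: ltnW.
  by rewrite -!natrM -natrD ler_nat.
have M0 : (0 : R) < m%:R by rewrite ltr0n.
have MJ : (m%:R : R) < j%:R by rewrite ltr_nat.
have J0 : (0 : R) < j%:R by lra.
set x1 : R := (j%:R * n1%:R - (j%:R - m%:R) * g%:R) / m%:R.
set t : R := m%:R / j%:R.
have in1 : in_newton q x1 j%:R.
  apply: (in_newton_pt nz) => //; rewrite /x1 ler_pdivlMr //; nra.
have t0 : 0 < t < 1.
  apply/andP; split; first by apply: divr_gt0.
  by rewrite /t ltr_pdivrMr // mul1r.
have e1 : (n1%:R : R) = t * x1 + (1 - t) * g%:R.
  rewrite /t /x1; field; apply/andP; split; lra.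
have e2 : (m%:R : R) = t * j%:R + (1 - t) * 0.
  rewrite /t; field; lra.
have [_ e] := ext _ _ _ _ _ in1 ing t0 e1 e2.
lra.
Qed.
End NE.
Section NF.
Lemma sum1_nz (R : realType) k (c : 'I_k -> R) : \sum_(t < k) c t = 1 -> exists t, c t != 0.
Proof.
move=> s1; apply: NNPP => H; move: s1; rewrite big1 => [e|t _].
  by move: (@oner_neq0 R); rewrite -e eqxx.
by apply/eqP; apply: NNPP => nz; apply: H; exists t; apply/negP.
Qed.

Lemma natr_inj (R : realType) (a b : nat) : (a%:R : R) = b%:R -> a = b.
Proof. by move/eqP; rewrite eqr_nat => /eqP. Qed.

Lemma newton_facts (R : realType) (q : series2 R) (vs : seq (nat * nat)) (g n1 m : nat) :
  (forall x y : R, newton_vertex q x y <->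
      exists2 v, v \in vs & x = (v.1)%:R /\ y = (v.2)%:R) ->
  sorted (fun a b => (b.2 < a.2)%N) vs ->
  (1 < size vs)%N ->
  nth (0%N, 0%N) vs (size vs).-1 = (g, 0%N) ->
  nth (0%N, 0%N) vs (size vs).-2 = (n1, m) ->
  (0 < m)%N -> (n1 < g)%N ->
  [/\ forall i j, q i j != 0 -> (m * g <= m * i + (g - n1) * j)%N,
      forall i j, q i j != 0 -> (m * i + (g - n1) * j <= m * g)%N -> (j <= m)%N,
      q g 0%N != 0 & q n1 m != 0].
Proof.
move=> Hv Hs s1 El Ep m0 ng.
have [n En] : exists n, size vs = n.+2 by exists (size vs).-2; case: (size vs) s1 => [|[|n]].
rewrite En /= in El Ep.
have sz1 : (n.+1 < size vs)%N by rewrite En.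
have sz2 : (n < size vs)%N by rewrite En.
have Vl : newton_vertex q g%:R 0.
  apply/Hv; exists (g, 0%N) => //; rewrite -El; exact: mem_nth.
have Vp : newton_vertex q n1%:R m%:R.
  apply/Hv; exists (n1, m) => //; rewrite -Ep; exact: mem_nth.
have F3 : forall i j, q i j != 0 -> (m * i + (g - n1) * j <= m * g)%N -> (j <= m)%N.
  move=> i j nz F; rewrite leqNgt; apply/negP => mj.
  exact: (nonext m0 ng Vp Vl.1 nz mj F).
set Fn := fun i j => (m * i + (g - n1) * j)%N.
have F1 : forall i j, q i j != 0 -> (m * g <= Fn i j)%N.
  move=> i j nz; rewrite leqNgt; apply/negP => lt.
  have [Fm [[i1 [j1 [nz1 e1]]] minF]] :=
    @ex_min (fun k => exists i j, q i j != 0 /\ Fn i j = k) (Fn i j) (ex_intro _ i (ex_intro _ j (conj nz erefl))).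
  have [jM [[iM [nzM eM]] minJ]] :=
    @ex_min (fun jj => exists ii, q ii jj != 0 /\ Fn ii jj = Fm) j1 (ex_intro _ i1 (conj nz1 e1)).
  have FmL : (Fm <= Fn i j)%N by apply: minF; exists i, j.
  have V : newton_vertex q iM%:R jM%:R.
    apply: (@extreme_of_min _ _ ((jM.+1 * m)%:R) ((jM.+1 * (g - n1) + 1)%:R)) => //.
    - by rewrite ltr0n muln_gt0 m0.
    - by rewrite ltr0n addn1.
    move=> i' j' nz' ne; rewrite -!natrM -!natrD ltr_nat.
    have exp : forall a b, (jM.+1 * m * a + (jM.+1 * (g - n1) + 1) * b = jM.+1 * Fn a b + b)%N.
      by move=> a b; rewrite /Fn; nia.
    rewrite !exp eM.
    have Fm' : (Fm <= Fn i' j')%N by apply: minF; exists i', j'.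
    case: (ltngtP Fm (Fn i' j')) Fm' => [lt' _ | // | eq' _].
      by nia.
    have jj : (jM <= j')%N by apply: minJ; exists i'.
    case: (ltngtP jM j') jj => [ltj _| // | eqj _]; first by lia.
    exfalso; apply: ne; subst j'.
    have : (m * i' = m * iM)%N by move: eq' eM; rewrite /Fn; lia.
    by move/eqP; rewrite eqn_mul2l (negbTE (lt0n_neq0 m0)) /= => /eqP ->.
  have [v vin [ex ey]] := (Hv _ _).1 V.
  have exn := natr_inj ex; have eyn := natr_inj ey.
  have /(nthP (0%N, 0%N)) [k ks ek] := vin.
  have FM : (Fn iM jM < m * g)%N by rewrite eM; lia.
  have : (k <= n.+1)%N by move: ks; rewrite En.
  rewrite leq_eqVlt => /orP [/eqP kl| kl].
    move: ek; rewrite kl El => ev; subst v; move: FM; rewrite exn eyn /Fn /=; lia.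
  have : (k <= n)%N by lia.
  rewrite leq_eqVlt => /orP [/eqP kp| kp].
    move: ek; rewrite kp Ep => ev; subst v; move: FM; rewrite exn eyn /Fn /=.
    by rewrite [((g - n1) * m)%N]mulnC -mulnDr subnKC ?ltnn //; exact: ltnW.
  have tr : transitive (fun a b : nat * nat => (b.2 < a.2)%N).
    by move=> y x z /= h1 h2; exact: ltn_trans h2 h1.
  have := @sorted_ltn_nth _ _ tr (0%N, 0%N) _ Hs k n.
  rewrite !inE Ep ek => /(_ ks sz2 kp) /= mj.
  apply: (nonext m0 ng Vp Vl.1 nzM); first by rewrite eyn.
  exact: ltnW FM.
split => //.
- have Hl : forall i j, q i j != 0 -> ((m * g)%:R : R) <= m%:R * i%:R + (g - n1 + m)%:R * j%:R.
    move=> i j nz; rewrite -!natrM -natrD ler_nat; have := F1 _ _ nz; rewrite /Fn; nia.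
  have [k [c [pt [[c0 c1 sp sx sy] [lb eqc]]]]] :=
    @newton_lb _ q (m%:R) ((g - n1 + m)%:R) ((m * g)%:R) _ _ (ler0n _ _) (ler0n _ _) Hl Vl.1.
  have [t ct] := sum1_nz c1.
    have le1 : (m%:R * g%:R + (g - n1 + m)%:R * 0 <= (m * g)%:R :> R) by rewrite mulr0 addr0 natrM.
    case: (eqc le1 t) => [ce|e]; first by move: ct; rewrite ce eqxx.
    move: e; rewrite -!natrM -natrD => /natr_inj e.
    have := F1 _ _ (sp t); rewrite /Fn => f1.
    have y0 : (pt t).2 = 0%N by nia.
    have x0 : (pt t).1 = g by rewrite y0 in e; move: e; rewrite muln0 addn0 => /eqP; rewrite eqn_mul2l (negbTE (lt0n_neq0 m0)) /= => /eqP.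
    by have := sp t; rewrite x0 y0.
- have Hl : forall i j, q i j != 0 -> ((m * g)%:R : R) <= m%:R * i%:R + (g - n1)%:R * j%:R.
    move=> i j nz; rewrite -!natrM -natrD ler_nat; have := F1 _ _ nz; rewrite /Fn; nia.
  have [k [c [pt [[c0 c1 sp sx sy] [lb eqc]]]]] :=
    @newton_lb _ q (m%:R) ((g - n1)%:R) ((m * g)%:R) _ _ (ler0n _ _) (ler0n _ _) Hl Vp.1.
  have le0 : (m%:R * n1%:R + (g - n1)%:R * m%:R <= (m * g)%:R :> R).
      rewrite -!natrM -natrD ler_nat.
      by rewrite [((g - n1) * m)%N]mulnC -mulnDr subnKC //; exact: ltnW.
    have ON : forall t, c t != 0 -> (m * (pt t).1 + (g - n1) * (pt t).2 = m * g)%N.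
      move=> t ct; case: (eqc le0 t) => [ce|]; first by move: ct; rewrite ce eqxx.
      by rewrite -!natrM -natrD => /natr_inj.
    have Sf : \sum_(t < k) c t * (m%:R * ((pt t).1)%:R + (g - n1)%:R * ((pt t).2)%:R) = (m * g)%:R.
      rewrite (eq_bigr (fun t => c t * (m * g)%:R)); last first.
        move=> t _; case: (boolP (c t == 0)) => [/eqP -> | ct]; first by rewrite !mul0r.
        by rewrite -!natrM -natrD ON.
      by rewrite -mulr_suml c1 mul1r.
    have E : \sum_(t < k) c t * (m%:R * ((pt t).1)%:R + (g - n1)%:R * ((pt t).2)%:R) =
         m%:R * \sum_(t < k) c t * ((pt t).1)%:R + (g - n1)%:R * \sum_(t < k) c t * ((pt t).2)%:R.
      rewrite !mulr_sumr -big_split /=; apply: eq_bigr => t _; ring.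
    have Gn : (0 : R) < (g - n1)%:R by rewrite ltr0n subn_gt0.
    have Mg : ((m * g)%:R : R) = m%:R * n1%:R + (g - n1)%:R * m%:R.
      rewrite -!natrM -natrD [((g - n1) * m)%N]mulnC -mulnDr subnKC //; exact: ltnW.
    have Sy : (m%:R : R) <= \sum_(t < k) c t * ((pt t).2)%:R.
      have : m%:R * \sum_(t < k) c t * ((pt t).1)%:R <= m%:R * n1%:R.
        by apply: ler_wpM2l => //; exact: ler0n.
      rewrite Sf in E; nra.
    have nn : forall t : 'I_k, true -> 0 <= c t * (m%:R - ((pt t).2)%:R).
      move=> t _; case: (boolP (c t == 0)) => [/eqP -> | ct]; first by rewrite mul0r.
      apply: mulr_ge0 => //; rewrite subr_ge0 ler_nat; apply: F3 (sp t) _; by rewrite ON.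
    have S0 : \sum_(t < k) c t * (m%:R - ((pt t).2)%:R) = 0.
      have Eq : \sum_(t < k) c t * (m%:R - ((pt t).2)%:R) = m%:R - \sum_(t < k) c t * ((pt t).2)%:R.
        rewrite -[m%:R in RHS]mul1r -c1 mulr_suml -sumrB; apply: eq_bigr => t _; ring.
      apply/eqP; rewrite eq_le; apply/andP; split; first by rewrite Eq; lra.
      by apply: sumr_ge0 => t _; exact: nn.
    have [t ct] := sum1_nz c1.
    have := psumr_eq0P nn S0; move/(_ t isT)/eqP; rewrite mulf_eq0 (negbTE ct) /= subr_eq0.
    move/eqP/natr_inj => ym.
    have := ON t ct; rewrite -ym => e.
    have xn : (pt t).1 = n1.
      have le' : (m * n1 <= m * g)%N by rewrite leq_mul2l ltnW ?orbT.
      have : (m * (pt t).1 = m * n1)%N by move: e; rewrite [((g - n1) * m)%N]mulnC mulnBr; lia.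
      by move/eqP; rewrite eqn_mul2l (negbTE (lt0n_neq0 m0)) /= => /eqP.
    by have := sp t; rewrite xn -ym.
Qed.
End NF.
Section IT.
Lemma kge_le (R : realType) (x y X Y : R) : X <= x -> y <= Y -> kge x y X Y.
Proof. rewrite /kge; lra. Qed.
Lemma kgt_kge (R : realType) (x y X Y : R) : kgt x y X Y -> kge x y X Y.
Proof. rewrite /kge /kgt; lra. Qed.
Lemma kge_refl (R : realType) (x y : R) : kge x y x y.
Proof. rewrite /kge; lra. Qed.

Lemma qsel (R : realType) (q : series2 R) (g n1 m : nat) (l1 r D : R) :
  (forall i j, q i j != 0 -> g%:R <= i%:R + l1 * j%:R) ->
  (forall i j, q i j != 0 -> i%:R + l1 * j%:R = g%:R -> (j <= m)%N) ->
  q g 0%N != 0 -> q n1 m != 0 -> n1%:R + l1 * m%:R = g%:R -> (0 < m)%N ->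
  l1 <= r -> (r = l1 -> 0 < D) ->
  exists i0 j0, [/\ q i0 j0 != 0, i0%:R + r * j0%:R = g%:R, (r = l1 -> (0 < j0)%N) &
    forall i j, q i j != 0 -> (i, j) <> (i0, j0) ->
      g%:R < i%:R + r * j%:R \/ (i%:R + r * j%:R = g%:R /\ j%:R * D < j0%:R * D)].
Proof.
move=> F1 F3 qg qn en m0 lr rD.
case: (eqVneq r l1) => [erl | nrl].
  subst r; exists n1, m; split => // i j nz ne.
  case: (ltrP g%:R (i%:R + l1 * j%:R)) => [lt|le]; first by left.
  have e : i%:R + l1 * j%:R = g%:R by have := F1 _ _ nz; lra.
  right; split => //.
  have jm := F3 _ _ nz e.
  have jm' : j <> m.
    move=> ej; apply: ne; subst j; congr pair; apply: natr_inj; lra.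
  have : (j < m)%N by lia.
  rewrite -(ltr_nat R) => h; have := rD erefl; nra.
have rl : l1 < r by rewrite lt_neqAle eq_sym nrl lr.
exists g, 0%N; split => //; first by rewrite mulr0 addr0.
  by move=> e; move: nrl; rewrite e eqxx.
move=> i j nz ne; left.
case: (posnP j) => [j0 | jp].
  subst j; have := F1 _ _ nz; rewrite !mulr0 !addr0 => h.
  rewrite lt_neqAle h andbT; apply/eqP => e; apply: ne; congr pair; exact: (natr_inj (esym e)).
have := F1 _ _ nz; have : (0 : R) < j%:R by rewrite ltr0n.
move=> hj h; nra.
Qed.
End IT.
Section IT2.
Lemma iter_inv (R : realType) (l : R) (p : series1 R) (q : series2 R) (d g n1 m : nat) (l1 al : R) :
  (1 <= d)%N -> (forall i, (i < d)%N -> p i = 0) -> p d != 0 ->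
  (forall i j, q i j != 0 -> g%:R <= i%:R + l1 * j%:R) ->
  (forall i j, q i j != 0 -> i%:R + l1 * j%:R = g%:R -> (j <= m)%N) ->
  q g 0%N != 0 -> q n1 m != 0 -> n1%:R + l1 * m%:R = g%:R -> (0 < m)%N -> (0 < g)%N ->
  0 < l1 -> l1 <= l -> l <= al -> al * d%:R = g%:R ->
  forall n, let rn := if n is 0%N then l else al in
  [/\ sge l (skew_iter p q n).1 (wt l (d ^ n) 0) 0%:R,
      (skew_iter p q n).1 (d ^ n)%N 0%N != 0 &
      exists A B, [/\ sge l (skew_iter p q n).2 (wt l A B) B%:R,
        (skew_iter p q n).2 A B != 0, (0 < A + B)%N,
        wt l A B = (d ^ n)%:R * rn & (rn = l1 -> (0 < B)%N)]].
Proof.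
move=> d1 pz pd F1 F3 qg qn en m0 g0 l10 l1l lal ald.
have dn0 : forall n, (0 : R) < (d ^ n)%:R by move=> n; rewrite ltr0n expn_gt0; lia.
have wtd : forall n, wt l (d ^ n) 0 = (d ^ n)%:R by move=> n; rewrite /wt mulr0 addr0.
elim=> [|n [IP1 IP2 [A [B [IQ1 IQ2 IQ3 IQ4 IQ5]]]]] rn.
  split.
  - move=> a b /=; rewrite /Zser; case: (a =P 1%N) => [->|]; case: (b =P 0%N) => [->|] //=;
      rewrite ?eqxx ?andbF ?andbT ?eqxx //= => _; exact: kge_refl.
  - by rewrite /= /Zser expn0 !eqxx oner_neq0.
  exists 0%N, 1%N; split => //.
  - move=> a b /=; rewrite /Wser; case: (a =P 0%N) => [->|]; case: (b =P 1%N) => [->|] //=;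
      rewrite ?eqxx ?andbF ?andbT ?eqxx //= => _; exact: kge_refl.
  - by rewrite /= /Wser !eqxx oner_neq0.
  - by rewrite /rn /wt expn0 mul1r add0r mulr1.
set P := (skew_iter p q n).1; set Q := (skew_iter p q n).2.
have ES : skew_iter p q n.+1 = (comp2 (ser1to2 p) P Q, comp2 q P Q) by [].
rewrite ES /=.
set r0 := if n is 0%N then l else al.
have IQ4' : wt l A B = (d ^ n)%:R * r0 := IQ4.
have sP : sge l P (wt l (d ^ n) 0) 0%:R := IP1.
have AB0 : (0 < d ^ n + 0)%N by rewrite addn0 expn_gt0; lia.
have ser : forall i j, ser1to2 p i j != 0 -> j = 0%N /\ (d <= i)%N /\ p i != 0.
  move=> i j; rewrite /ser1to2; case: (j =P 0%N) => [-> nz|]; last by rewrite eqxx.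
  split => //; split => //; rewrite leqNgt; apply/negP => lt; move: nz; by rewrite pz ?eqxx.
have x_eq : forall i j, i%:R * wt l (d ^ n) 0 + j%:R * wt l A B = (d ^ n)%:R * (i%:R + r0 * j%:R).
  move=> i j; rewrite wtd IQ4'; ring.
split.
- apply: (comp2_ge sP IQ1) => i j /ser [-> [di _]].
  apply: kge_le; last by rewrite !mulr0 mul0r addr0.
  rewrite wtd mul0r addr0 wtd expnS natrM; apply: ler_wpM2r; [exact: ltW | by rewrite ler_nat].
- have := @comp2_exact _ l (ser1to2 p) P Q (d ^ n) 0 A B d 0 sP IQ1 AB0 IQ3.
  rewrite !mul0n !addn0 muln0 -expnS => ->.
  + rewrite expr0 mulr1; apply: mulf_neq0; first by rewrite /ser1to2 eqxx.
    exact: expf_neq0.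
  + move=> i j /ser [ej [di pi]] ne; subst j; left.
    rewrite !mul0r !addr0 wtd ltr_pM2r // ltr_nat ltn_neqAle di andbT.
    by apply/eqP => e; apply: ne; rewrite e.
have r0l : l1 <= r0 by rewrite /r0; case: (n) => [|n'] /=; lra.
have r0D : r0 = l1 -> (0 : R) < B%:R by move=> e; rewrite ltr0n; exact: IQ5 e.
have [i0 [j0 [qi0 ei0 pj0 Hsel]]] := @qsel _ q g n1 m l1 r0 B%:R F1 F3 qg qn en m0 r0l r0D.
have strict : forall i j, q i j != 0 -> (i, j) <> (i0, j0) ->
    kgt (i%:R * wt l (d ^ n) 0 + j%:R * wt l A B) (i%:R * 0%:R + j%:R * B%:R)
        (i0%:R * wt l (d ^ n) 0 + j0%:R * wt l A B) (i0%:R * 0%:R + j0%:R * B%:R).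
  move=> i j nz ne; rewrite !x_eq ei0 !mulr0 !add0r.
  case: (Hsel _ _ nz ne) => [lt | [e lt]].
    by left; rewrite ltr_pM2l.
  by right; rewrite e; split.
have Qex := @comp2_exact _ l q P Q (d ^ n) 0 A B i0 j0 sP IQ1 AB0 IQ3 strict.
have Kw : wt l (i0 * d ^ n + j0 * A) (i0 * 0 + j0 * B) = (d ^ n)%:R * g%:R.
  by rewrite wtD !wtM x_eq ei0.
exists (i0 * d ^ n + j0 * A)%N, (i0 * 0 + j0 * B)%N; split.
- apply: (comp2_ge sP IQ1) => i j nz.
  have -> : (i0 * 0 + j0 * B)%:R = (i0%:R * 0%:R + j0%:R * B%:R : R) by rewrite natrD !natrM.
  rewrite wtD !wtM.
  case: (pair_eqP (i, j) (i0, j0)) => [[-> ->]|ne]; first exact: kge_refl.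
  exact: kgt_kge (strict _ _ nz ne).
- rewrite Qex; apply: mulf_neq0; first apply: mulf_neq0 => //; exact: expf_neq0.
- rewrite lt0n; apply/eqP => e.
  have [a0 b0] : (i0 * d ^ n + j0 * A = 0 /\ i0 * 0 + j0 * B = 0)%N by lia.
  move: Kw; rewrite a0 b0 /wt mulr0 addr0 => /esym/eqP; rewrite mulf_eq0 !pnatr_eq0.
  by rewrite expn_eq0; lia.
- by rewrite Kw /= expnS natrM -ald /rn; ring.
- rewrite /rn => e.
  have e' : r0 = l1 by rewrite /r0; case: (n) => [|n'] /=; [lra | exact: e].
  rewrite muln0 add0n muln_gt0 (pj0 e') /=; exact: IQ5.
Qed.
End IT2.
Lemma alg_id (R : realType) (M G N : R) : M != 0 -> G - N != 0 -> G != 0 ->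
  G / (M * G / (G - N)) = (G - N) / M.
Proof. move=> h1 h2 h3; field; by rewrite h1 h2 h3. Qed.

Lemma gamma_n0 g delta n : (1 <= n)%N -> gamma_n g delta 0 n = (g * delta ^ n.-1)%N.
Proof.
case: n => [//|n] _; rewrite /gamma_n big_ord_recl /= subn0 expn0 muln1.
rewrite big1 ?addn0 // => k _; by rewrite expnS mul0n muln0.
Qed.

Unset Implicit Arguments.
Set Strict Implicit.

Theorem theorem4p1 (R : realType) (p : series1 R) (q : series2 R)
    (delta : nat) (vs : seq (nat * nat)) :
  (* p(z) = a_delta z^delta + O(z^(delta+1)), a_delta <> 0, delta >= 1, p holomorphic *)
  (1 <= delta)%N ->
  (forall i, (i < delta)%N -> p i = 0) ->
  p delta != 0 ->
  convergent1 p ->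
  (* q(z,w) = sum_{i+j>=1} b_ij z^i w^j holomorphic, not identically zero *)
  q 0%N 0%N = 0 ->
  convergent2 q ->
  (exists i j, q i j != 0) ->
  (* vs = [(n_1,m_1); ...; (n_s,m_s)] lists the vertices of N(q) *)
  (forall x y : R, newton_vertex q x y <->
      exists2 v, v \in vs & x = (v.1)%:R /\ y = (v.2)%:R) ->
  sorted (fun a b => (a.1 < b.1)%N) vs ->
  sorted (fun a b => (b.2 < a.2)%N) vs ->
  let s := size vs in
  let n_s := (nth (0%N, 0%N) vs s.-1).1 in
  let m_s := (nth (0%N, 0%N) vs s.-1).2 in
  let n_s1 := (nth (0%N, 0%N) vs s.-2).1 in
  let m_s1 := (nth (0%N, 0%N) vs s.-2).2 in
  (* T_{s-1}: y-intercept of the line through (n_{s-1},m_{s-1}), (n_s,m_s) *)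
  let T := m_s1%:R + n_s1%:R * (m_s1%:R - m_s%:R) / (n_s%:R - n_s1%:R) : R in
  let gamma := n_s in
  let d := m_s in
  let l1 := (n_s%:R - n_s1%:R) / (m_s1%:R - m_s%:R) : R in
  let alpha := gamma%:R / (delta%:R - d%:R) : R in
  (* Case 2 *)
  (1 < s)%N ->
  delta%:R <= T ->
  (* d = 0 *)
  d = 0%N ->
  (d < delta)%N /\
  (forall l : R, l1 <= l <= alpha -> forall n : nat, (1 <= n)%N ->
     wl_is (Qiter p q n) l (gamma_n gamma delta d n)%:R /\
     gamma_n gamma delta d n = (gamma * delta ^ n.-1)%N) /\
  (delta%:R = T ->
     (forall l : R, l1 <= l <= alpha <-> l = l1) /\
     (forall n : nat, (1 <= n)%N ->
        wl_is (Qiter p q n) l1 (gamma_n gamma delta d n)%:R)).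
Proof.
move=> d1 pz pd _ _ _ _ Hv Hs1 Hs2 s n_s m_s n_s1 m_s1 T gamma d l1 alpha s1 dT d0.
have ms0 : m_s = 0%N by exact: d0.
have [k Ek] : exists k, s = k.+2 by exists s.-2; move: s1; rewrite /s; case: (size vs) => [|[|k']].
have kk1 : (k < k.+1)%N by [].
have tr1 : transitive (fun a b : nat * nat => (a.1 < b.1)%N).
  by move=> y x z /= h1 h2; exact: ltn_trans h1 h2.
have tr2 : transitive (fun a b : nat * nat => (b.2 < a.2)%N).
  by move=> y x z /= h1 h2; exact: ltn_trans h2 h1.
have ink : (k \in [pred n | (n < size vs)%N]) by rewrite inE -/s Ek; lia.
have ink1 : (k.+1 \in [pred n | (n < size vs)%N]) by rewrite inE -/s Ek.
have ng : (n_s1 < n_s)%N.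
  have := @sorted_ltn_nth _ _ tr1 (0%N, 0%N) _ Hs1 k k.+1 ink ink1 kk1.
  by rewrite /n_s /n_s1 -/s Ek.
have mm : (m_s < m_s1)%N.
  have := @sorted_ltn_nth _ _ tr2 (0%N, 0%N) _ Hs2 k k.+1 ink ink1 kk1.
  by rewrite /m_s /m_s1 -/s Ek.
rewrite ms0 in mm.
have El : nth (0%N, 0%N) vs (size vs).-1 = (n_s, 0%N).
  have El0 : nth (0%N, 0%N) vs (size vs).-1 = (n_s, m_s) := surjective_pairing _.
  by rewrite El0 ms0.
have Ep : nth (0%N, 0%N) vs (size vs).-2 = (n_s1, m_s1).
  exact: surjective_pairing.
have [F1n F3n qg qn] := newton_facts Hv Hs2 s1 El Ep mm ng.
have M0 : (0 : R) < m_s1%:R by rewrite ltr0n.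
have msR : (m_s%:R : R) = 0 by rewrite ms0.
have l1E : l1 = (n_s%:R - n_s1%:R) / m_s1%:R by rewrite /l1 msR subr0.
have key : forall i j, (m_s1%:R : R) * (i%:R + l1 * j%:R) = (m_s1 * i + (n_s - n_s1) * j)%:R.
  move=> i j; rewrite natrD !natrM natrB; last exact: ltnW.
  rewrite l1E; field; lra.
have en : n_s1%:R + l1 * m_s1%:R = n_s%:R by rewrite l1E; field; lra.
have F1r : forall i j, q i j != 0 -> n_s%:R <= i%:R + l1 * j%:R.
  move=> i j nz; rewrite -(ler_pM2l M0) key -natrM ler_nat; exact: F1n.
have F3r : forall i j, q i j != 0 -> i%:R + l1 * j%:R = n_s%:R -> (j <= m_s1)%N.
  move=> i j nz e; apply: F3n nz _.
  by rewrite -(ler_nat R) -key e natrM.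
have g0 : (0 < n_s)%N by lia.
have Gn : (0 : R) < n_s%:R - n_s1%:R by rewrite subr_gt0 ltr_nat.
have l10 : 0 < l1 by rewrite l1E; apply: divr_gt0.
have D0 : (0 : R) < delta%:R by rewrite ltr0n.
have alE : alpha = n_s%:R / delta%:R by rewrite /alpha /gamma /d msR subr0.
have ald : alpha * delta%:R = n_s%:R by rewrite alE; field; lra.
have part2 : forall l : R, l1 <= l <= alpha -> forall n : nat, (1 <= n)%N ->
     wl_is (Qiter p q n) l (gamma_n gamma delta d n)%:R /\
     gamma_n gamma delta d n = (gamma * delta ^ n.-1)%N.
  move=> l /andP [l1l lal] n n1.
  have gE : gamma_n gamma delta d n = (gamma * delta ^ n.-1)%N by rewrite /d ms0 gamma_n0.
  split => //; rewrite gE.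
  have [_ _ [A [B [Q1 Q2 _ Q4 _]]]] :=
    @iter_inv R l p q delta n_s n_s1 m_s1 l1 alpha d1 pz pd F1r F3r qg qn en mm g0 l10 l1l lal ald n.
  have wE : wt l A B = (gamma * delta ^ n.-1)%:R.
    rewrite Q4; case: n n1 {gE Q1 Q2 Q4} => [//|n] _ /=.
    by rewrite expnS natrM natrM /gamma -ald; ring.
  split.
  - by exists A, B; split => //; rewrite -wE.
  - move=> a b nz; have := Q1 a b nz; rewrite /kge -wE /wt; lra.
split; first by rewrite /d ms0.
split => //.
move=> dTe.
have Te : T = m_s1%:R * n_s%:R / (n_s%:R - n_s1%:R).
  by rewrite /T msR subr0; field; lra.
have al1 : alpha = l1.
  have h1 : (m_s1%:R : R) != 0 by rewrite gt_eqF.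
  have h2 : (n_s%:R - n_s1%:R : R) != 0 by rewrite gt_eqF.
  have h3 : (n_s%:R : R) != 0 by rewrite pnatr_eq0 -lt0n.
  rewrite alE l1E dTe Te; exact: alg_id h1 h2 h3.
split.
- move=> l; split; first by rewrite al1 => /andP [h1 h2]; lra.
  by move=> ->; rewrite al1 lexx.
- move=> n n1; have := part2 l1 _ n n1; rewrite al1 lexx => /(_ isT) [] //.
Qed.
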